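(* In a minimally non-perfectly divisible graph $G$, every vertex belongs to a clique of size $\omega(G)$.
   Context: All graphs are finite and simple. For $S\subseteq V(G)$, $G[S]$ is the subgraph induced by $S$. $\omega(G)$ is the number of vertices in a largest clique of $G$ and $\chi(G)$ the chromatic number. A graph $G$ is perfect if $\chi(H)=\omega(H)$ for every induced subgraph $H$ of $G$. A partition $(A,B)$ of $V(G)$ is good if $G[A]$ is perfect and $\omega(G[B])<\omega(G)$. A graph $G$ is perfectly divisible if every induced subgraph $H$ of $G$ with at least one edge admits a good partition (of $V(H)$). A graph is minimally non-perfectly divisible if it is not perfectly divisible but each of its proper induced subgraphs is perfectly divisible. *)

(* Defs.v *)
From mathcomp Require Import all_boot.
Set Implicit Arguments. Unset Strict Implicit. Unset Printing Implicit Defensive.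

(* Induced subgraphs are given by vertex sets
   S : {set T}; G[S] is the graph on S with the adjacency e. *)
Section Graph.
Variables (T : finType) (e : rel T).

Definition simple_graph : Prop := symmetric e /\ irreflexive e.

Definition clique_in (S K : {set T}) : bool :=
  (K \subset S) && [forall x in K, forall y in K, (x != y) ==> e x y].

Definition omega (S : {set T}) : nat :=
  \max_(K : {set T} | clique_in S K) #|K|.

Definition proper_col (S : {set T}) (f : {ffun T -> 'I_#|T|}) : bool :=
  [forall x in S, forall y in S, e x y ==> (f x != f y)].

(* chi(G[S]) : least number of colours used by a proper colouring of G[S]
   (colours drawn from 'I_#|T|, which always suffices). *)
Definition chi (S : {set T}) : nat :=
  \big[minn/#|T|]_(f : {ffun T -> 'I_#|T|} | proper_col S f) #|f @: S|.

Definition perfect (S : {set T}) : Prop :=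
  forall H : {set T}, H \subset S -> chi H = omega H.

Definition good_partition (S A B : {set T}) : Prop :=
  A :|: B = S /\ A :&: B = set0 /\ perfect A /\ omega B < omega S.

Definition has_edge (S : {set T}) : Prop :=
  exists x y, [/\ x \in S, y \in S & e x y].

Definition perfectly_divisible (S : {set T}) : Prop :=
  forall H : {set T}, H \subset S -> has_edge H ->
    exists A B : {set T}, good_partition H A B.

Definition minimally_non_pd : Prop :=
  ~ perfectly_divisible [set: T] /\
  forall S : {set T}, S \proper [set: T] -> perfectly_divisible S.

End Graph.

(* Main.v *)
Require Import Defs.
From mathcomp Require Import all_boot.

Set Implicit Arguments. Unset Strict Implicit.
Section L.
Variables (T : finType) (e : rel T).

Lemma omega_ge (S K : {set T}) : clique_in e S K -> #|K| <= omega e S.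
Proof. by move=> h; exact: (@leq_bigmax_cond _ _ (fun K : {set T} => #|K|) K h). Qed.

Lemma omega_att (S : {set T}) : exists2 K, clique_in e S K & #|K| = omega e S.
Proof.
have h0 : clique_in e S set0 by rewrite /clique_in sub0set; apply/forall_inP=> x; rewrite inE.
have hc : 0 < #|[pred K : {set T} | clique_in e S K]| by apply/card_gt0P; exists set0.
have [K hK hm] := @eq_bigmax_cond _ _ (fun K : {set T} => #|K|) hc.
by exists K => //; rewrite /omega; move: hm; rewrite /= => ->.
Qed.

Lemma clique_sub (S S' K : {set T}) : S \subset S' -> clique_in e S K -> clique_in e S' K.
Proof. by move=> sS /andP[sK h]; rewrite /clique_in (subset_trans sK sS) h. Qed.

Lemma omega_mono (S S' : {set T}) : S \subset S' -> omega e S <= omega e S'.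
Proof. by move=> sS; have [K hK <-] := omega_att S; apply: omega_ge; exact: clique_sub sS hK. Qed.
End L.

Theorem lemma2 (T : finType) (e : rel T) :
  simple_graph e -> minimally_non_pd e ->
  forall v : T, exists K : {set T},
    [/\ clique_in e [set: T] K, v \in K & #|K| = omega e [set: T]].
Proof.
move=> [esym eirr] [npd minpd] v.
case: (boolP [exists K, [&& clique_in e [set: T] K, v \in K & #|K| == omega e [set: T]]]).
  by move=> /existsP[K /and3P[h1 h2 /eqP h3]]; exists K.
move=> /existsPn hno; exfalso; apply: npd => H _ hedge.
case: (eqVneq H [set: T]) => [-> | Hne]; last first.
  apply: (minpd H) => //; by rewrite properT.
have [K Kc Kw] := @omega_att _ e [set: T].
have vK : v \notin K.
  apply/negP=> vK; move: (hno K); by rewrite Kc vK Kw eqxx.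
case: hedge => x [y [_ _ exy]].
have xy : x != y by apply/eqP=> ex; move: exy; rewrite ex eirr.
have c2 : clique_in e [set: T] [set x; y].
  rewrite /clique_in subsetT /=; apply/forall_inP=> a Ha; apply/forall_inP=> b Hb.
  apply/implyP=> nab; move: Ha Hb nab; rewrite !inE => /orP[]/eqP-> /orP[]/eqP->;
  by rewrite ?eqxx // esym.
have K2 : 1 < #|K| by rewrite Kw; have := omega_ge c2; rewrite cards2 xy; exact.
have [a [b [aK bK ab]]] : exists a b, [/\ a \in K, b \in K & a != b].
  have [a aK] : exists a, a \in K by apply/set0Pn; rewrite -card_gt0 ltnW.
  have : 0 < #|K :\ a| by rewrite (cardsD1 a K) aK in K2.
  rewrite card_gt0 => /set0Pn[b]; rewrite !inE => /andP[ba bK].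
  by exists a, b; split; rewrite // eq_sym.
have eab : e a b by move: Kc => /andP[_ /forall_inP/(_ a aK)/forall_inP/(_ b bK)/implyP]; apply.
have Sp : [set: T] :\ v \proper [set: T] by rewrite properT; apply/eqP=> /setP/(_ v); rewrite !inE eqxx.
have hE : has_edge e ([set: T] :\ v).
  exists a, b; split=> //; rewrite !inE andbT; apply/eqP=> ev; subst;
  by rewrite ?aK ?bK in vK.
have [A [B [hU [hI [pA oB]]]]] := minpd _ Sp _ (subxx _) hE.
exists A, (v |: B); split; last split; last split=> //.
- by rewrite setUCA hU setD1K ?inE.
- rewrite setIUr hI setU0; apply/setP=> z; rewrite !inE; apply/andP=> -[zA /eqP zv].
  by subst z; move/setP: hU => /(_ v); rewrite !inE eqxx zA.
- have hlt : omega e B < omega e [set: T].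
    apply: leq_trans oB _; exact: omega_mono (subsetT _).
  have [K' K'c <-] := @omega_att _ e (v |: B).
  have K'c2 : clique_in e [set: T] K' by apply: clique_sub K'c; apply: subsetT.
  case: (boolP (v \in K')) => vK'.
    rewrite ltn_neqAle omega_ge // andbT.
    by apply/negP => hh; move: (hno K'); rewrite K'c2 vK' hh.
  have K'B : clique_in e B K'.
    move: K'c => /andP[sK h]; rewrite /clique_in h andbT.
    apply/subsetP=> z zK; move/subsetP: sK => /(_ z zK); rewrite !inE => /orP[/eqP ez|//].
    by subst z; rewrite zK in vK'.
  exact: leq_ltn_trans (omega_ge K'B) hlt.
Qed.
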